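(* Let $N=(V,E)$ be a tree-child phylogenetic network such that no two parents of a hybrid node are connected by a path. For all nodes $u,v\in V$, the following are equivalent: (i) $C(u)=C(v)$; (ii) $u=v$, or $\{u,v\}$ consists of a hybrid node and its only child.
   Context: A DAG is labeled in a finite set $S$ if its leaves (out-degree 0) are bijectively labeled by $S$. A tree node has in-degree at most 1; a hybrid node has in-degree greater than 1; a tree child of a node is a child that is a tree node. A tree-child phylogenetic network is a rooted DAG labeled in $S$ in which every non-leaf node has at least one tree child, no tree node has out-degree 1, and every hybrid node has out-degree exactly 1. The condition that no two parents of a hybrid node are connected by a path means: if $u_1,u_2$ are the parents of a hybrid node, there is no path $u_1\rightsquigarrow u_2$ nor $u_2\rightsquigarrow u_1$. $C(u)$ (the cluster of $u$) is the set of leaves that are descendants of $u$ (reachable from $u$ by a path, including $u$ itself if it is a leaf). *)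

(* Defs.v *)
From mathcomp Require Import all_boot.
Set Implicit Arguments. Unset Strict Implicit. Unset Printing Implicit Defensive.

Section Network.
Variables (V : finType) (E : rel V).

Definition indeg (v : V) : nat := #|[set u | E u v]|.
Definition outdeg (u : V) : nat := #|[set w | E u w]|.

Definition is_leaf (v : V) : bool := outdeg v == 0.
Definition is_tree_node (v : V) : bool := indeg v <= 1.
Definition is_hybrid (v : V) : bool := 1 < indeg v.

Definition acyclic : Prop := forall u v, E u v -> ~~ connect E v u.

Definition rooted : Prop :=
  exists r : V, indeg r = 0 /\ forall v, connect E r v.

Definition labeled_in (S : finType) (lab : V -> S) : Prop :=
  {in is_leaf &, injective lab} /\ (forall s : S, exists2 x, is_leaf x & lab x = s).

Definition tree_child_network (S : finType) (lab : V -> S) : Prop :=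
  acyclic /\ rooted /\ labeled_in lab /\
  (forall u, ~~ is_leaf u -> exists2 w, E u w & is_tree_node w) /\
  (forall u, is_tree_node u -> outdeg u != 1) /\
  (forall u, is_hybrid u -> outdeg u = 1).

Definition hybrid_parents_unconnected : Prop :=
  forall h u1 u2, is_hybrid h -> E u1 h -> E u2 h -> u1 != u2 ->
    ~~ connect E u1 u2.

Definition cluster (S : finType) (lab : V -> S) (u : V) : {set S} :=
  [set lab x | x in [set x | is_leaf x & connect E u x]].

End Network.

(* Main.v *)
Require Import Defs.
From mathcomp Require Import all_boot.
Set Implicit Arguments. Unset Strict Implicit.

Lemma conn_first (V : finType) (E : rel V) x y :
  connect E x y -> x != y -> exists2 z, E x z & connect E z y.
Proof.
case/connectP => [[|z p]] /=; first by move=> _ -> /eqP.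
move/andP=> [exz pz] -> _; exists z => //; by apply/connectP; exists p.
Qed.

Lemma conn_last (V : finType) (E : rel V) x y :
  connect E x y -> x != y -> exists2 z, connect E x z & E z y.
Proof.
case/connectP => p pth ->; case/lastP: p pth => [|p z]; first by move=> _ /eqP.
rewrite rcons_path last_rcons => /andP[pp ez] _.
exists (last x p) => //; by apply/connectP; exists p.
Qed.

Lemma tree_par (V : finType) (E : rel V) w p q :
  is_tree_node E w -> E p w -> E q w -> p = q.
Proof.
rewrite /is_tree_node /indeg => /card_le1_eqP H epw eqw.
by apply: H; rewrite inE.
Qed.

Lemma hyb_of (V : finType) (E : rel V) w p q :
  E p w -> E q w -> p != q -> is_hybrid E w.
Proof.
move=> epw eqw npq; rewrite /is_hybrid /indeg.
have sub : [set p; q] \subset [set u | E u w].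
  by apply/subsetP => x; rewrite !inE => /orP[]/eqP->.
by apply: leq_trans (subset_leq_card sub); rewrite cards2 npq.
Qed.

Lemma not_leaf (V : finType) (E : rel V) v z : E v z -> ~~ is_leaf E v.
Proof.
move=> evz; rewrite /is_leaf /outdeg cards_eq0; apply/set0Pn; exists z; by rewrite inE.
Qed.

Lemma cyc2 (V : finType) (E : rel V) a b :
  acyclic E -> connect E a b -> connect E b a -> a != b -> False.
Proof.
move=> acyc cab cba nab; have [z eaz czb] := conn_first cab nab.
by move/negP: (acyc _ _ eaz); apply; apply: connect_trans czb cba.
Qed.

Lemma Lpath (V : finType) (E : rel V) :
  acyclic E ->
  (forall u, ~~ is_leaf E u -> exists2 w, E u w & is_tree_node E w) ->
  forall w, exists y, [/\ is_leaf E y, connect E w y &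
      forall z, connect E z y -> connect E z w \/ connect E w z].
Proof.
move=> acyc tc.
suff H: forall n w, #|[set x | connect E w x]| <= n -> exists y, [/\ is_leaf E y, connect E w y &
      forall z, connect E z y -> connect E z w \/ connect E w z].
  by move=> w; exact: H _ w (leqnn _).
elim=> [|n IH] w Hn.
  rewrite leqn0 cards_eq0 in Hn; move/eqP: Hn => Hn.
  have : w \in [set x | connect E w x] by rewrite inE connect0.
  by rewrite Hn inE.
case: (boolP (is_leaf E w)) => lw.
  by exists w; split => // z; left.
have [w' ew' tw'] := tc w lw.
have: #|[set x | connect E w' x]| <= n.
  rewrite -ltnS; apply: leq_trans Hn; apply: proper_card; apply/properP; split.
    by apply/subsetP => x; rewrite !inE => cx; apply: connect_trans (connect1 ew') cx.
  by exists w; rewrite !inE ?connect0 //; apply: acyc.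
move/IH => [y [ly cy Hy]]; exists y; split => //.
  exact: connect_trans (connect1 ew') cy.
move=> z /Hy [czw'|cw'z].
  case: (eqVneq z w') => [->|nz]; first by right; exact: connect1 ew'.
  left; have [p czp epw'] := conn_last czw' nz.
  by rewrite (tree_par tw' epw' ew') in czp.
by right; apply: connect_trans (connect1 ew') cw'z.
Qed.

Definition Desc (V : finType) (E : rel V) v u :=
  forall y, is_leaf E y -> connect E v y -> connect E u y.

Lemma lemB (V : finType) (E : rel V) :
  acyclic E ->
  (forall u, ~~ is_leaf E u -> exists2 w, E u w & is_tree_node E w) ->
  (forall u, is_tree_node E u -> outdeg E u != 1) ->
  hybrid_parents_unconnected E ->
  forall v u, connect E v u -> v != u -> Desc E v u ->
  is_hybrid E v /\ exists t, [/\ E v t, is_tree_node E t, connect E t u &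
                                 forall w, E v w -> w = t].
Proof.
move=> acyc tc tn1 hpu v u cvu nvu D.
have A : forall w, E v w -> connect E w u.
  move=> w evw; have [y [ly cwy Hy]] := Lpath acyc tc w.
  have cuy : connect E u y := D y ly (connect_trans (connect1 evw) cwy).
  case: (Hy u cuy) => // cuw.
  case: (eqVneq u w) => [->|nuw]; first exact: connect0.
  have [p cup epw] := conn_last cuw nuw.
  case: (eqVneq p v) => [epv|npv].
    by subst p; exfalso; apply: (cyc2 acyc cvu cup nvu).
  have hy := hyb_of epw evw npv.
  have nvp : v != p by rewrite eq_sym.
  by move/negP: (hpu w v p hy evw epw nvp); case; apply: connect_trans cvu cup.
have [z evz _] := conn_first cvu nvu.
have [t evt tt] := tc v (not_leaf evz).
have ctu := A t evt.
have U : forall w, E v w -> w = t.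
  move=> w evw; case: (eqVneq w t) => // nwt; exfalso.
  have [y [ly cwy Hy]] := Lpath acyc tc w.
  have cty : connect E t y.
    by apply: connect_trans ctu (D y ly (connect_trans (connect1 evw) cwy)).
  case: (Hy t cty) => [ctw|cwt].
    have ntw : t != w by rewrite eq_sym.
    have [p ctp epw] := conn_last ctw ntw.
    case: (eqVneq p v) => [epv|npv].
      by subst p; move/negP: (acyc _ _ evt); apply.
    have hy := hyb_of epw evw npv.
    have nvp : v != p by rewrite eq_sym.
    move/negP: (hpu w v p hy evw epw nvp).
    by apply; apply: connect_trans (connect1 evt) ctp.
  have [p cwp ept] := conn_last cwt nwt.
  rewrite (tree_par tt ept evt) in cwp.
  by move/negP: (acyc _ _ evw); apply.
split; last by exists t.
case: (boolP (is_hybrid E v)) => // nh.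
have tv : is_tree_node E v by rewrite /is_tree_node leqNgt.
have : outdeg E v = 1.
  rewrite /outdeg (_ : [set w | E v w] = [set t]) ?cards1 //; apply/setP => w; rewrite !inE.
  by apply/idP/eqP => [/U|->].
by move/eqP; rewrite (negbTE (tn1 v tv)).
Qed.

Lemma main1 (V : finType) (E : rel V) :
  acyclic E ->
  (forall u, ~~ is_leaf E u -> exists2 w, E u w & is_tree_node E w) ->
  (forall u, is_tree_node E u -> outdeg E u != 1) ->
  hybrid_parents_unconnected E ->
  forall v u, connect E v u -> v != u -> Desc E v u ->
  is_hybrid E v /\ E v u /\ (forall w, E v w -> w = u).
Proof.
move=> acyc tc tn1 hpu v u cvu nvu D.
have [hv [t [evt tt ctu U]]] := lemB acyc tc tn1 hpu cvu nvu D.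
case: (eqVneq t u) => [etu|ntu]; first by subst t.
have Dt : Desc E t u by move=> y ly cty; apply: D ly (connect_trans (connect1 evt) cty).
have [ht _] := lemB acyc tc tn1 hpu ctu ntu Dt.
by move: ht tt; rewrite /is_hybrid /is_tree_node ltnNge => /negbTE ->.
Qed.

Unset Implicit Arguments.

Theorem lemma5 (V : finType) (E : rel V) (S : finType) (lab : V -> S) :
  tree_child_network E lab ->
  hybrid_parents_unconnected E ->
  forall u v : V,
    cluster E lab u = cluster E lab v <->
    (u = v \/
     (is_hybrid E u /\ E u v /\ (forall w, E u w -> w = v)) \/
     (is_hybrid E v /\ E v u /\ (forall w, E v w -> w = u))).
Proof.
move=> [acyc [_ [[inj _] [tc [tn1 _]]]]] hpu.
have Dl : forall u v, cluster E lab u = cluster E lab v -> Desc E u v.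
  move=> u v H y ly cuy.
  have : lab y \in cluster E lab v.
    by rewrite -H; apply/imsetP; exists y; rewrite // inE ly cuy.
  case/imsetP => y'; rewrite inE => /andP[ly' cvy'] eq.
  by rewrite (inj y y' ly ly' eq).
have Cl : forall u v, E u v -> (forall w, E u w -> w = v) ->
    cluster E lab u = cluster E lab v.
  move=> u v euv U; rewrite /cluster.
  suff -> : [set x | is_leaf E x & connect E u x] = [set x | is_leaf E x & connect E v x] by [].
  apply/setP => y; rewrite !inE; case ly: (is_leaf E y) => //=.
  apply/idP/idP => [cuy|]; last exact: connect_trans (connect1 euv).
  case: (eqVneq u y) => [euy|nuy].
    by subst y; move: ly; rewrite (negbTE (not_leaf euv)).
  by have [z euz czy] := conn_first cuy nuy; rewrite -(U z euz).
move=> u v; split => [H|].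
  case: (eqVneq u v) => [->|nuv]; first by left.
  have [y [ly cuy Hy]] := Lpath acyc tc u.
  case: (Hy v (Dl u v H y ly cuy)) => [cvu|cuv].
    right; right; apply: main1 => //.
      by rewrite eq_sym.
    exact: Dl.
  by right; left; apply: main1 => //; apply: Dl.
case=> [->//|[[_ [euv U]]|[_ [evu U]]]]; first exact: Cl.
by symmetry; apply: Cl.
Qed.
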